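(* Let $q$ be a prime power, $n\ge1$, $P=\sum_{s=0}^m a_s\theta^s\in\mathbb F_q[\theta]$ nonzero, where $m\ge\deg P$ is an integer with $(q-1)\mid(m+n)$, and put $\iota(P)=\sum_{i=0}^m a_{m-i}\theta^i$ and $k=\frac{m+n}{q-1}-1$, assumed $\ge1$. For a polynomial $R=\sum_s b_s\theta^s$ let $\mathfrak M(R,T,n,k)\in M_{k\times k}(\mathbb F_q[T])$ have entries $\mathfrak M(R,T,n,k)_{i,j}=\sum_{l=0}^nT^{n-l}(-1)^l\binom nl b_{iq-j-l}$ ($1\le i,j\le k$, $b_s=0$ for $s<0$ or $s>m$). Let $W_3=\sum_{i=1}^k\varepsilon_{i,k+1-i}$ be the $k\times k$ matrix with ones on the antidiagonal and zeros elsewhere. Then $$W_3\,\mathfrak M(P,T,n,k)\,W_3^{-1}=(-T)^n\,\mathfrak M(\iota(P),T^{-1},n,k).$$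
   Context: $\varepsilon_{ij}$ denotes the elementary matrix with $1$ in position $(i,j)$ and $0$ elsewhere. $\mathfrak M(\iota(P),T^{-1},n,k)$ means $\mathfrak M(\iota(P),T,n,k)$ with $T$ replaced by $T^{-1}$. Binomial coefficients are read in $\mathbb F_q$. *)

(* Defs.v *)
From mathcomp Require Import all_boot all_order all_algebra.
From mathcomp Require Export fraction.
Set Implicit Arguments. Unset Strict Implicit. Unset Printing Implicit Defensive.
Import GRing.Theory.
Local Open Scope ring_scope.

Definition bcoef (F : nzRingType) (R : {poly F}) (s : int) : F :=
  match s with Posz s' => R`_s' | Negz _ => 0 end.

Definition iota_poly (F : nzRingType) (m : nat) (P : {poly F}) : {poly F} :=
  \poly_(i < m.+1) P`_(m - i).

Definition Mfrak (F K : nzRingType) (emb : F -> K) (q : nat)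
  (R : {poly F}) (t : K) (n k : nat) : 'M[K]_k :=
  \matrix_(i < k, j < k)
    \sum_(l < n.+1) t ^+ (n - l) * emb ((-1) ^+ l * 'C(n, l)%:R *
        bcoef R ((i.+1 * q)%:Z - (j.+1)%:Z - l%:Z)).

Definition W3 (K : nzRingType) (k : nat) : 'M[K]_k :=
  \matrix_(i < k, j < k) (j == rev_ord i)%:R.

Definition embF (F : fieldType) (a : F) : {fraction {poly F}} := @tofrac _ (a%:P).

(* Main.v *)
Require Import Defs.
From mathcomp Require Import all_boot all_order all_algebra.
From mathcomp Require Import fraction.
From mathcomp Require Import zify ring.
Import GRing.Theory.
Local Open Scope ring_scope.

Lemma W3_sq (K : comUnitRingType) k : W3 K k *m W3 K k = 1%:M.
Proof.
apply/matrixP => i j; rewrite !mxE (bigD1 (rev_ord i)) //= !mxE eqxx mul1r.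
rewrite big1 ?addr0.
  by rewrite rev_ordK eq_sym.
by move=> r /negbTE Hr; rewrite !mxE Hr mul0r.
Qed.

Lemma invW3 (K : comUnitRingType) k : invmx (W3 K k) = W3 K k.
Proof.
have H := W3_sq K k; have [U _] := mulmx1_unit H.
by rewrite -[LHS]mulmx1 -H mulmxA mulVmx // mul1mx.
Qed.

Lemma conjW3 (K : comUnitRingType) k (M : 'M[K]_k) :
  W3 K k *m M *m W3 K k = \matrix_(i, j) M (rev_ord i) (rev_ord j).
Proof.
apply/matrixP => i j; rewrite !mxE (bigD1 (rev_ord j)) //= !mxE.
rewrite (bigD1 (rev_ord i)) //= !mxE eqxx mul1r.
rewrite big1 ?addr0; last by move=> r /negbTE; rewrite !mxE eq_sym => ->; rewrite mul0r.
rewrite rev_ordK eqxx mulr1 big1 ?addr0 //.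
move=> r Hr; rewrite !mxE.
have -> : (j == rev_ord r) = false.
  by apply/negbTE; apply: contra Hr => /eqP ->; rewrite rev_ordK.
by rewrite mulr0.
Qed.

Lemma bcoef_iota (F : nzRingType) m (P : {poly F}) (s t : int) :
  (size P <= m.+1)%N -> s + t = m%:Z -> bcoef (iota_poly m P) t = bcoef P s.
Proof.
move=> HP; case: t => [t|t]; case: s => [s|s] /= Hst.
- rewrite coef_poly; case: ifP => Ht.
    by congr (P`_ _); lia.
  lia.
- rewrite coef_poly ifF //; lia.
- by rewrite nth_default //; apply: leq_trans HP _; lia.
- lia.
Qed.

Theorem proposition5p3 (F : finFieldType) (n m : nat) (P : {poly F}) :
  (1 <= n)%N -> P != 0 -> (size P <= m.+1)%N ->
  (#|F|.-1 %| m + n)%N ->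
  (1 <= ((m + n) %/ #|F|.-1).-1)%N ->
  let k := ((m + n) %/ #|F|.-1).-1 in
  let T : {fraction {poly F}} := @tofrac _ 'X in
  W3 _ k *m Mfrak (@embF F) #|F| P T n k *m invmx (W3 _ k)
  = (- T) ^+ n *: Mfrak (@embF F) #|F| (iota_poly m P) T^-1 n k.
Proof.
move=> n1 P0 HP Hdvd Hk k T.
set q := #|F|.
have q1 : (1 < q)%N by rewrite /q; exact: card_finNzRing_gt1.
have Hkq : (k.+1 * q.-1 = m + n)%N.
  rewrite /k prednK; last lia.
  by rewrite divnK.
have T0 : T != 0 by rewrite /T tofrac_eq0 polyX_eq0.
rewrite invW3 conjW3; apply/matrixP => i j; rewrite !mxE mulr_sumr.
rewrite [in RHS](reindex_inj rev_ord_inj) /=.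
apply: eq_bigr => l _.
have Hl : (l < n.+1)%N := ltn_ord l.
have Hi : (i < k)%N := ltn_ord i.
have Hj : (j < k)%N := ltn_ord j.
rewrite subSS subKn; last lia.
rewrite bin_sub; last lia.
rewrite (@bcoef_iota _ m P (((k - i.+1).+1 * q)%:Z - (k - j.+1).+1%:Z - l%:Z)) //; last first.
  have E : (k - i.+1).+1 = (k - i)%N by lia.
  have E2 : (k - j.+1).+1 = (k - j)%N by lia.
  rewrite E E2.
  have H1 : ((k - i) * q + i.+1 * q = k.+1 * q)%N.
    by rewrite -mulnDl; congr (_ * _)%N; lia.
  have H2 : (k.+1 * q = m + n + k.+1)%N.
    by rewrite -Hkq -{1}(prednK (ltnW q1)) mulnS addnC.
  move: H1 H2; generalize ((k - i) * q)%N (i.+1 * q)%N (k.+1 * q)%N.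
  move=> A B C H1 H2; lia.
set x := bcoef P _.
rewrite /embF !(rmorphM, rmorphXn, rmorphN, rmorph1) /=.
set c := tofrac _; set y := tofrac _.
have -> : (- T) ^+ n = (-1) ^+ (n - l) * (-1) ^+ l * (T ^+ (n - l) * T ^+ l).
  by rewrite [LHS]exprNn -{1 2}(subnK (ltnSE Hl)) !exprD; ring.
have E : T ^+ l * T^-1 ^+ l = 1 by rewrite -exprMn mulfV // expr1n.
have S : (-1) ^+ (n - l) * (-1) ^+ (n - l) = 1 :> {fraction {poly F}}.
  by rewrite -exprD addnn -mul2n exprM sqrrN !expr1n.
transitivity (T ^+ (n - l) * ((-1) ^+ l * c * y) * ((-1) ^+ (n - l) * (-1) ^+ (n - l)) * (T ^+ l * T^-1 ^+ l)).
  by rewrite E S !mulr1.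
ring.
Qed.
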